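(* (Optimality within horizon.) Given a start location (product-graph state) $l_0$ of the robot at current time $t_0$ and a horizon length $H$, the plan generated by $\textsf{DT*}$ is optimal in terms of the number of cycles completed within the horizon: among all decision sequences consisting of shortest prefix paths and shortest suffix cycles in the reduced product graph starting at $l_0$ at time $t_0$ (with time-dependent edge costs reflecting the known dynamic obstacles), none completes more suffix cycles in the time interval $[t_0,t_0+H]$ than the generated plan.
   Context: Setting: a robot moves in a 2D grid modelled by a weighted transition system $T$ (cells, obstacle cells, moves left/right/up/down with positive time costs, atomic propositions labelling cells); an LTL task $\phi$ has B\''uchi automaton $B_\phi$ with accepting states $F$; the product graph of $T$ and $B_\phi$ is reduced to a graph $G_r=(V_r,v_0,E_r,F_r,w_r)$, $V_r\subseteq S_T\times S_B$, $F_r$ the nodes whose automaton component is in $F$, where edges represent shortest paths in the product graph. Dynamic obstacles make some cells unavailable for known time intervals, so edge costs are time-dependent (including waiting). From a node $l_i$ at time $t_i$ the available decisions are: traverse a shortest prefix path to some destination node $l_j\in F_r$, arriving at time $t_j$; or, if $l_i\in F_r$, traverse a shortest cycle from $l_i$ back to $l_i$, arriving at $t_j$ (this completes a cycle). $\textsf{DT*}$ encodes all such decision sequences starting at $l_0$ at time $t_0$ within the horizon $[t_0,t_0+H]$ as SMT constraints (Boolean variables $X_{l t}$ for being at $l$ at time $t$, exactly one successor decision per visited node, at most one location per time, no decision at intermediate times of an ongoing traversal) and asks the solver to lexicographically maximize the number of completed cycles, then minimize the length of the last completed cycle, then minimize the completion time of the last cycle. *)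

(* Defs.v *)
From mathcomp Require Import all_boot.
Set Implicit Arguments.
Unset Strict Implicit.
Unset Printing Implicit Defensive.

(* Reduced product graph G_r = (V_r, v_0, E_r, F_r, w_r) together with the
   time-dependent shortest-traversal oracles induced by the known dynamic
   obstacles (including waiting). *)
Record red_graph (V : finType) := RGraph {
  acc : pred V;
  pre_arr : V -> V -> nat -> option nat;     (* pre_arr li lj t = Some t' : leaving li at time t
                                                along a time-dependent shortest prefix path,
                                                one arrives at lj at time t' (None: unreachable) *)
  cyc_arr : V -> nat -> option nat           (* cyc_arr l t = Some t' : leaving l at time t along a
                                                time-dependent shortest cycle, one is back at l at t' *)
}.

(* A decision: shortest prefix path to a destination lj in F_r, or a shortest
   suffix cycle from the current (accepting) node back to itself. *)
Inductive decision (V : Type) := Pre of V | Cyc.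
Arguments Cyc {V}.

Definition is_cyc (V : Type) (o : option (decision V)) : bool :=
  if o is Some Cyc then true else false.

Definition step (V : finType) (G : red_graph V) (l : V) (t : nat) (d : decision V)
  : option (V * nat) :=
  match d with
  | Pre lj => if acc G lj then omap (fun t' => (lj, t')) (pre_arr G l lj t) else None
  | Cyc => if acc G l then omap (fun t' => (l, t')) (cyc_arr G l t) else None
  end.

Definition dstep (V : finType) (G : red_graph V) (l : V) (t : nat)
  (o : option (decision V)) : option (V * nat) :=
  if o is Some d then step G l t d else None.

Fixpoint valid_seq (V : finType) (G : red_graph V) (l : V) (t : nat)
  (ds : seq (decision V)) : bool :=
  match ds with
  | [::] => true
  | d :: ds' => if step G l t d is Some (l', t') then valid_seq G l' t' ds' else false
  end.

Fixpoint cycles_by (V : finType) (G : red_graph V) (T : nat) (l : V) (t : nat)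
  (ds : seq (decision V)) : nat :=
  match ds with
  | [::] => 0
  | d :: ds' =>
      if step G l t d is Some (l', t') then
        ((if d is Cyc then t' <= T else false) : nat) + cycles_by G T l' t' ds'
      else 0
  end.

(* ---------- The DT* SMT encoding ----------
   X l t : Boolean "robot is at node l at time t";
   Y l t : the (unique) successor decision taken at (l,t), None = no further decision. *)
Definition dt_valid (V : finType) (G : red_graph V) (l0 : V) (t0 H : nat)
  (X : V -> nat -> bool) (Y : V -> nat -> option (decision V)) : Prop :=
  [/\ X l0 t0,
      (forall l t, X l t -> t0 <= t <= t0 + H),
      (forall l l' t, X l t -> X l' t -> l = l'),
      (forall l t, X l t ->
         match Y l t with
         | None => forall l' s, t < s -> ~~ X l' s
         | Some d => exists l' t', [/\ step G l t d = Some (l', t'), t' <= t0 + H, X l' t'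
                                  & forall l'' s, t < s < t' -> ~~ X l'' s]
         end)
    &
      (forall l t, X l t -> (l, t) <> (l0, t0) ->
         exists l' s, [/\ X l' s, s < t & dstep G l' s (Y l' s) = Some (l, t)])].

Definition ncyc (V : finType) (t0 H : nat)
  (X : V -> nat -> bool) (Y : V -> nat -> option (decision V)) : nat :=
  \sum_(t < (t0 + H).+1) \sum_(l : V) (X l t && is_cyc (Y l t) : nat).

(* departure time of the last completed cycle (0 if none) *)
Definition last_cyc_dep (V : finType) (t0 H : nat)
  (X : V -> nat -> bool) (Y : V -> nat -> option (decision V)) : nat :=
  \max_(t < (t0 + H).+1 | [exists l : V, X l t && is_cyc (Y l t)]) (t : nat).

Definition last_cyc (V : finType) (G : red_graph V) (t0 H : nat)
  (X : V -> nat -> bool) (Y : V -> nat -> option (decision V)) : nat * nat :=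
  let tl := last_cyc_dep t0 H X Y in
  match [pick l : V | X l tl && is_cyc (Y l tl)] with
  | Some l => match cyc_arr G l tl with
              | Some ta => (ta - tl, ta)
              | None => (0, 0)
              end
  | None => (0, 0)
  end.

Definition dt_obj (V : finType) (G : red_graph V) (t0 H : nat)
  (X : V -> nat -> bool) (Y : V -> nat -> option (decision V)) : nat * nat * nat :=
  (ncyc t0 H X Y, (last_cyc G t0 H X Y).1, (last_cyc G t0 H X Y).2).

Definition lex_better (a b : nat * nat * nat) : bool :=
  (a.1.1 > b.1.1) ||
  ((a.1.1 == b.1.1) && ((a.1.2 < b.1.2) || ((a.1.2 == b.1.2) && (a.2 < b.2)))).

(* (X, Y) is a plan generated by DT*: a lexicographically optimal model of the encoding *)
Definition dt_optimal (V : finType) (G : red_graph V) (l0 : V) (t0 H : nat)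
  (X : V -> nat -> bool) (Y : V -> nat -> option (decision V)) : Prop :=
  dt_valid G l0 t0 H X Y /\
  forall X' Y', dt_valid G l0 t0 H X' Y' ->
    ~~ lex_better (dt_obj G t0 H X' Y') (dt_obj G t0 H X Y).

(* Main.v *)
Require Import Defs.
From mathcomp Require Import all_boot.
Set Implicit Arguments.
Unset Strict Implicit.
Unset Printing Implicit Defensive.

Section Aux.
Variables (V : finType) (G : red_graph V).

Definition valid' (l : V) (t T : nat) (X : V -> nat -> bool)
  (Y : V -> nat -> option (decision V)) : Prop :=
  [/\ X l t,
      (forall l2 s, X l2 s -> t <= s <= T),
      (forall a b s, X a s -> X b s -> a = b),
      (forall l2 s, X l2 s ->
         match Y l2 s with
         | None => forall l' s', s < s' -> ~~ X l' s'
         | Some d => exists l' t', [/\ step G l2 s d = Some (l', t'), t' <= T, X l' t'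
                                  & forall l'' s', s < s' < t' -> ~~ X l'' s']
         end)
    & (forall l2 s, X l2 s -> (l2, s) <> (l, t) ->
         exists l' s', [/\ X l' s', s' < s & dstep G l' s' (Y l' s') = Some (l2, s)])].

Definition cnt (T : nat) (X : V -> nat -> bool) (Y : V -> nat -> option (decision V)) :=
  \sum_(s < T.+1) \sum_(l : V) (X l s && is_cyc (Y l s) : nat).

Hypothesis pos : forall l t d l' t', step G l t d = Some (l', t') -> t < t'.

Lemma cyc_late T ds : forall l t, T < t -> cycles_by G T l t ds = 0.
Proof.
elim: ds => [//|d ds IH] l t Ht /=.
case E: (step G l t d) => [[l' t']|] //.
have := pos E => Htt.
rewrite IH; last exact: ltn_trans Htt.
case: d E => // _; rewrite addn0; apply/eqP; rewrite eqb0 -ltnNge.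
exact: ltn_trans Htt.
Qed.

Lemma base_valid l t T : t <= T ->
  valid' l t T (fun l2 s => (l2 == l) && (s == t)) (fun _ _ => None).
Proof.
move=> HtT; split.
- by rewrite !eqxx.
- by move=> l2 s /andP[_ /eqP->]; rewrite leqnn.
- by move=> a b s /andP[/eqP-> _] /andP[/eqP-> _].
- by move=> l2 s /andP[_ /eqP->] l' s' Hs; apply/negP => /andP[_ /eqP E]; rewrite E ltnn in Hs.
- by move=> l2 s /andP[/eqP-> /eqP->].
Qed.

Lemma base_cnt l t T : cnt T (fun l2 s => (l2 == l) && (s == t)) (fun _ _ => None) = 0.
Proof. by apply: big1 => i _; apply: big1 => j _; rewrite andbF. Qed.

Lemma build T ds : forall l t, t <= T -> exists X Y,
  valid' l t T X Y /\ cycles_by G T l t ds <= cnt T X Y.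
Proof.
elim: ds => [|d ds IH] l t HtT.
  by exists (fun l2 s => (l2 == l) && (s == t)), (fun _ _ => None); split;
    [exact: base_valid|].
case E: (step G l t d) => [[l' t']|]; last first.
  exists (fun l2 s => (l2 == l) && (s == t)), (fun _ _ => None); split;
    [exact: base_valid|by rewrite /= E].
have Htt := pos E.
case: (leqP t' T) => Ht'T; last first.
  exists (fun l2 s => (l2 == l) && (s == t)), (fun _ _ => None); split;
    [exact: base_valid|].
  rewrite /= E cyc_late // addn0; case: d E => // _.
  by move: Ht'T; rewrite ltnNge => /negbTE ->.
have [X1 [Y1 [[X1a X1b X1c X1d X1e] Hc]]] := IH l' t' Ht'T.
pose X := fun l2 s => ((l2 == l) && (s == t)) || X1 l2 s.
pose Y := fun l2 s => if (l2 == l) && (s == t) then Some d else Y1 l2 s.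
have X1t : forall l2 s, X1 l2 s -> t < s.
  by move=> l2 s /X1b /andP[H _]; exact: leq_trans Htt H.
have Y1e : forall l2 s, X1 l2 s -> Y l2 s = Y1 l2 s.
  move=> l2 s /X1t Hs; rewrite /Y.
  by case: eqP => //= _; case: eqP => // Es; rewrite Es ltnn in Hs.
exists X, Y; split.
- split.
  + by rewrite /X !eqxx.
  + move=> l2 s /orP[/andP[_ /eqP->]|/X1b /andP[H1 H2]]; first by rewrite leqnn.
    by rewrite H2 andbT; apply: ltnW; exact: leq_trans Htt H1.
  + move=> a b s /orP[/andP[/eqP-> /eqP->]|Ha] /orP[/andP[/eqP-> /eqP Es]|Hb] //.
    * by have := X1t _ _ Hb; rewrite ltnn.
    * by move: (X1t _ _ Ha); rewrite Es ltnn.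
    * exact: X1c Ha Hb.
  + move=> l2 s /orP[/andP[/eqP-> /eqP->]|Hx].
      rewrite /Y !eqxx /=; exists l', t'; split => //; first by rewrite /X X1a orbT.
      move=> l'' s' /andP[H1 H2]; rewrite /X negb_or; apply/andP; split.
        by apply/negP => /andP[_ /eqP Es]; rewrite Es ltnn in H1.
      by apply/negP => /X1b /andP[H3 _]; rewrite leqNgt H2 in H3.
    rewrite Y1e //; have := X1d _ _ Hx; case: (Y1 l2 s) => [d'|].
      move=> [l3 [t3 [S1 S2 S3 S4]]]; exists l3, t3; split => //; first by rewrite /X S3 orbT.
      move=> l'' s' Hs'; rewrite /X negb_or S4 // andbT.
      apply/negP => /andP[_ /eqP Es]; move: Hs' (X1t _ _ Hx); rewrite Es.
      by case/andP => H1 _ H2; have := ltn_trans H1 H2; rewrite ltnn.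
    move=> Hn l3 s' Hs'; rewrite /X negb_or Hn // andbT.
    apply/negP => /andP[_ /eqP Es]; move: Hs' (X1t _ _ Hx); rewrite Es.
    by move=> H1 H2; have := ltn_trans H1 H2; rewrite ltnn.
  + move=> l2 s /orP[/andP[/eqP-> /eqP->] //|Hx] Hne.
    case: (boolP ((l2 == l') && (s == t'))) => [/andP[/eqP-> /eqP->]|Hn].
      exists l, t; split => //; first by rewrite /X !eqxx.
      by rewrite /Y !eqxx /=.
    have Hne' : (l2, s) <> (l', t') by move=> [E1 E2]; rewrite E1 E2 !eqxx in Hn.
    have [l3 [s3 [A1 A2 A3]]] := X1e _ _ Hx Hne'.
    exists l3, s3; split => //; first by rewrite /X A1 orbT.
    by rewrite Y1e.
- rewrite /= E.
  have -> : cnt T X Y = ((if d is Cyc then true else false) : nat) + cnt T X1 Y1.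
    rewrite /cnt /X /Y.
    rewrite (eq_bigr (fun s : 'I_T.+1 => ((s == t :> nat) * (if d is Cyc then true else false))
        + \sum_(l2 : V) (X1 l2 s && is_cyc (Y1 l2 s) : nat))); last first.
      move=> s _.
      rewrite (eq_bigr (fun l2 => ((l2 == l) && (s == t :> nat)) * (if d is Cyc then true else false)
          + (X1 l2 s && is_cyc (Y1 l2 s) : nat))); last first.
        move=> l2 _; case: (boolP ((l2 == l) && (s == t :> nat))) => [/andP[/eqP-> /eqP Es]|Hn] /=.
          have -> : X1 l s = false by apply/negP => /X1t; rewrite Es ltnn.
          by rewrite addn0 mul1n; case: d {E Y Y1e}.
        by rewrite mul0n add0n.
      rewrite big_split /=; congr (_ + _).
      rewrite (bigD1 l) //= eqxx /= big1 ?addn0 //.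
      by move=> i /negbTE ->.
    rewrite big_split /=; congr (_ + _).
    have Ht : t < T.+1 by rewrite ltnS; exact: HtT.
    rewrite (bigD1 (Ordinal Ht)) //= eqxx mul1n big1 ?addn0 //.
    move=> i Hi; case: eqP => //= Ei; exfalso; move/eqP: Hi; apply.
    by apply: val_inj.
  rewrite leq_add //.
  all: case: d {E Y Y1e} => //=; by rewrite Ht'T.
Qed.

End Aux.

Theorem theorem2 (V : finType) (G : red_graph V) (l0 : V) (t0 H : nat)
  (pre_pos : forall li lj t t', pre_arr G li lj t = Some t' -> t < t')
  (cyc_pos : forall l t t', cyc_arr G l t = Some t' -> t < t')
  (X : V -> nat -> bool) (Y : V -> nat -> option (decision V)) :
  dt_optimal G l0 t0 H X Y ->
  forall ds : seq (decision V), valid_seq G l0 t0 ds ->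
    cycles_by G (t0 + H) l0 t0 ds <= ncyc t0 H X Y.
Proof.
move=> [_ Hopt] ds _.
have pos : forall l t d l' t', step G l t d = Some (l', t') -> t < t'.
  move=> l t [lj|] l' t' /=.
    case: (acc G lj) => //; case E: (pre_arr G l lj t) => [u|] //= [_ <-].
    exact: pre_pos E.
  case: (acc G l) => //; case E: (cyc_arr G l t) => [u|] //= [_ <-].
  exact: cyc_pos E.
have [X' [Y' [Hv Hc]]] := build pos ds l0 (leq_addr H t0).
have Hv' : dt_valid G l0 t0 H X' Y'.
  by case: Hv.
apply: (leq_trans Hc).
have := Hopt _ _ Hv'; rewrite /lex_better /dt_obj /=.
by rewrite negb_or => /andP[]; rewrite -leqNgt.
Qed.
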